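(* Let $\vec{\mathcal G}$ be an ergodic graph of a deterministic two-player mean-payoff game and suppose $r\in\mathcal P^{\sigma,\tau}$ for some $(\sigma,\tau)\in\Xi$. If $(i,j)\in E$ with $i\in V_{\min}$ and $j\ne\tau(i)$, then $(x,r_{-ij})\in\mathcal P^{\sigma,\tau}$ for all $x>\lambda^{\sigma,\tau}(r)+u^{\sigma,\tau}_i(r)-u^{\sigma,\tau}_j(r)$. If $(i,j)\in E$ with $i\in V_{\max}$ and $j\ne\sigma(i)$, then $(x,r_{-ij})\in\mathcal P^{\sigma,\tau}$ for all $x<\lambda^{\sigma,\tau}(r)+u^{\sigma,\tau}_i(r)-u^{\sigma,\tau}_j(r)$.
   Context: Setting: directed graph $\vec{\mathcal G}=([n],E)$ without multiple edges (loops allowed), each vertex having an outgoing edge, $[n]=V_{\max}\uplus V_{\min}$, weights $r\in\mathbb R^E=\mathbb R^m$; $(x,r_{-ij})$ is $r$ with coordinate $ij$ replaced by $x$. Ergodic equation in $(\lambda,u)$: $\lambda+u_i=\max_{(i,j)\in E}\{r_{ij}+u_j\}$ ($i\in V_{\max}$), $\lambda+u_i=\min_{(i,j)\in E}\{r_{ij}+u_j\}$ ($i\in V_{\min}$); $u$ is a bias if $(\lambda,u)$ solves it; the graph is ergodic if it is solvable for every $r$. Policies $\sigma,\tau$ choose outgoing edges at Max/Min vertices; a pair is bias-induced if some bias $u$ has $\sigma(i)$ attaining the max and $\tau(i)$ attaining the min at every vertex. $\vec{\mathcal G}^{\sigma,\tau}$ keeps at each vertex only the chosen edge; $\Xi$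 is the set of pairs with exactly one directed cycle in $\vec{\mathcal G}^{\sigma,\tau}$. $\lambda^{\sigma,\tau}(r)$ is the mean weight of that cycle and $u^{\sigma,\tau}(r)_l$ is the total weight, for edge weights $r_{ij}-\lambda^{\sigma,\tau}(r)$, of the path in $\vec{\mathcal G}^{\sigma,\tau}$ from $l$ to the smallest-index vertex on the cycle. $\mathcal P^{\sigma,\tau}$ is the set of $r$ such that $(\sigma,\tau)$ is the only pair of bias-induced policies for weights $r$. *)

(* Defs.v *)
From mathcomp Require Import all_boot all_order all_algebra.
From mathcomp Require Import reals.
Set Implicit Arguments. Unset Strict Implicit. Unset Printing Implicit Defensive.
Import Order.TTheory GRing.Theory Num.Theory.
Local Open Scope ring_scope.

(* Game graph: vertices 'I_n, edges E : rel 'I_n (no multi-edges, loops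
   allowed), Max vertices isMax, Min vertices the complement.
   Weights r : 'I_n -> 'I_n -> R (only values r i j with E i j matter).
   A pair of policies (sigma, tau) is encoded as a single map s : 'I_n -> 'I_n,
   s i = sigma i on Max vertices and s i = tau i on Min vertices. *)

Section Game.
Variables (R : realType) (n : nat) (E : rel 'I_n) (isMax : pred 'I_n).

Definition solves (r : 'I_n -> 'I_n -> R) (lam : R) (u : 'I_n -> R) : Prop :=
  forall i,
    (isMax i ->
       (forall j, E i j -> r i j + u j <= lam + u i) /\
       (exists j, E i j /\ r i j + u j = lam + u i)) /\
    (~~ isMax i ->
       (forall j, E i j -> lam + u i <= r i j + u j) /\
       (exists j, E i j /\ r i j + u j = lam + u i)).

Definition ergodic : Prop :=
  forall r : 'I_n -> 'I_n -> R, exists lam u, solves r lam u.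

Definition is_policy (s : 'I_n -> 'I_n) : Prop := forall i, E i (s i).

Definition bias_induced (r : 'I_n -> 'I_n -> R) (s : 'I_n -> 'I_n) : Prop :=
  is_policy s /\
  exists lam u, solves r lam u /\ forall i, r i (s i) + u (s i) = lam + u i.

Definition inP (r : 'I_n -> 'I_n -> R) (s : 'I_n -> 'I_n) : Prop :=
  bias_induced r s /\ forall s', bias_induced r s' -> s' =1 s.

Definition on_cycle (s : 'I_n -> 'I_n) (i : 'I_n) : bool :=
  [exists k : 'I_n, iter k.+1 s i == i].

Definition cyc (s : 'I_n -> 'I_n) : {set 'I_n} := [set i | on_cycle s i].

(* Xi: the functional graph of s has exactly one directed cycle, i.e.
   all cycle vertices lie on one orbit *)
Definition inXi (s : 'I_n -> 'I_n) : Prop :=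
  is_policy s /\ (exists i, on_cycle s i) /\
  forall i j, on_cycle s i -> on_cycle s j -> exists k, iter k s i = j.

Definition lam_pol (s : 'I_n -> 'I_n) (r : 'I_n -> 'I_n -> R) : R :=
  (\sum_(i in cyc s) r i (s i)) / (#|cyc s|%:R).

Definition is_min_cyc (s : 'I_n -> 'I_n) (v : 'I_n) : bool :=
  on_cycle s v && [forall w : 'I_n, on_cycle s w ==> (v <= w)%N].

Definition steps (s : 'I_n -> 'I_n) (l : 'I_n) : nat :=
  find (fun k => is_min_cyc s (iter k s l)) (iota 0 n).

Definition u_pol (s : 'I_n -> 'I_n) (r : 'I_n -> 'I_n -> R) (l : 'I_n) : R :=
  \sum_(k < steps s l) (r (iter k s l) (iter k.+1 s l) - lam_pol s r).

End Game.

Definition upd (R : Type) (n : nat) (r : 'I_n -> 'I_n -> R) (i j : 'I_n) (x : R)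
  : 'I_n -> 'I_n -> R :=
  fun k l => if (k == i) && (l == j) then x else r k l.

(* Main.v *)
Require Import Defs.
From mathcomp Require Import all_boot all_order all_algebra.
From mathcomp Require Import reals.
From mathcomp Require Import lra zify.
Import Order.TTheory GRing.Theory Num.Theory.
Local Open Scope ring_scope.
Set Implicit Arguments. Unset Strict Implicit.

Definition tight (R : realType) (n : nat) (r : 'I_n -> 'I_n -> R)
  (s : 'I_n -> 'I_n) (lam : R) (u : 'I_n -> R) : Prop :=
  forall k, r k (s k) + u (s k) = lam + u k.

Definition strict (R : realType) (n : nat) (E : rel 'I_n) (isMax : pred 'I_n)
  (r : 'I_n -> 'I_n -> R) (s : 'I_n -> 'I_n) (lam : R) (u : 'I_n -> R) : Prop :=
  forall k l, E k l -> l != s k ->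
    (isMax k -> r k l + u l < lam + u k) /\
    (~~ isMax k -> lam + u k < r k l + u l).

Lemma pigeon (n : nat) (s : 'I_n -> 'I_n) (l : 'I_n) :
  exists p q, [/\ (p < q)%N, (q <= n)%N & iter p s l = iter q s l].
Proof.
have : ~~ injectiveb (fun k : 'I_n.+1 => iter k s l).
  apply/negP => /injectiveP Hi; have := @leq_card _ _ _ Hi.
  by rewrite !card_ord ltnn.
move/injectivePn => [x [y xy exy]].
have xn := ltn_ord x; have yn := ltn_ord y.
case: (ltngtP x y) => [lt|gt|eq].
- by exists x, y; split => //; lia.
- by exists y, x; split => //; lia.
- by move: xy; rewrite (val_inj eq) eqxx.
Qed.

Lemma iter_cycle (n : nat) (s : 'I_n -> 'I_n) (l : 'I_n) :
  on_cycle s (iter n s l).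
Proof.
have [p [q [pq qn E]]] := pigeon s l.
apply/existsP.
have Hk : ((q - p).-1 < n)%N by lia.
exists (Ordinal Hk) => /=.
rewrite -iterS (_ : ((q - p).-1.+1 = q - p)%N); last by lia.
apply/eqP; rewrite -iterD.
have -> : (q - p + n = (n - p) + q)%N by lia.
by rewrite iterD -E -iterD subnK //; lia.
Qed.

Lemma shorten (n : nat) (s : 'I_n -> 'I_n) (l v : 'I_n) (m : nat) :
  iter m s l = v -> exists m', (m' < n)%N /\ iter m' s l = v.
Proof.
move: v; elim/ltn_ind: m => m IH v Hm.
case: (ltnP m n) => [lt|ge]; first by exists m.
have [p [q [pq qn E]]] := pigeon s l.
apply: (IH (m - q + p)%N); first lia.
rewrite -Hm iterD E -iterD subnK //; lia.
Qed.

Lemma iter_mul (n : nat) (s : 'I_n -> 'I_n) (a : 'I_n) (k : nat) :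
  iter k.+1 s a = a -> forall m, iter (m * k.+1) s a = a.
Proof.
move=> H; elim => [|m IH] //.
by rewrite mulSn iterD IH H.
Qed.

Lemma cyc_inj (n : nat) (s : 'I_n -> 'I_n) : {in cyc s &, injective s}.
Proof.
move=> a b; rewrite !inE => /existsP[ka /eqP Ha] /existsP[kb /eqP Hb] Hab.
have Na : iter (kb.+1 * ka.+1) s a = a by apply: iter_mul.
have Nb : iter (kb.+1 * ka.+1) s b = b by rewrite mulnC; apply: iter_mul.
rewrite -{1}Na -{1}Nb.
rewrite (_ : (kb.+1 * ka.+1 = (kb.+1 * ka.+1).-1.+1)%N); last by lia.
by rewrite !iterSr Hab.
Qed.

Lemma cyc_stable (n : nat) (s : 'I_n -> 'I_n) (a : 'I_n) :
  a \in cyc s -> s a \in cyc s.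
Proof.
rewrite !inE => /existsP[k /eqP Hk]; apply/existsP; exists k.
by rewrite -iterSr iterS Hk.
Qed.

Lemma sum_shift (R : realType) (n : nat) (s : 'I_n -> 'I_n) (u : 'I_n -> R) :
  \sum_(k in cyc s) u (s k) = \sum_(k in cyc s) u k.
Proof.
rewrite -(big_imset _ (@cyc_inj n s)).
have -> : [set s x | x in cyc s] = cyc s; last by [].
apply/eqP; rewrite eqEcard card_in_imset ?leqnn ?andbT; last exact: cyc_inj.
by apply/subsetP => y /imsetP [x xc ->]; apply: cyc_stable.
Qed.

Lemma lam_eq (R : realType) (n : nat) (E : rel 'I_n) (s : 'I_n -> 'I_n)
  (r : 'I_n -> 'I_n -> R) (lam : R) (u : 'I_n -> R) :
  inXi E s -> tight r s lam u -> lam = lam_pol s r.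
Proof.
move=> [_ [[c0 hc0] _]] Ht; rewrite /lam_pol.
have Hsum : \sum_(i in cyc s) r i (s i) = \sum_(i in cyc s) (lam + (u i - u (s i))).
  by apply: eq_bigr => i _; have := Ht i; lra.
rewrite Hsum big_split /= sumrB (sum_shift s u) subrr addr0 sumr_const.
rewrite -[X in X / _]mulr_natr mulfK // pnatr_eq0 -lt0n card_gt0.
by apply/set0Pn; exists c0; rewrite inE.
Qed.

Lemma tele (R : realType) (n : nat) (s : 'I_n -> 'I_n)
  (r : 'I_n -> 'I_n -> R) (lam : R) (u : 'I_n -> R) :
  tight r s lam u -> forall m l,
  \sum_(k < m) (r (iter k s l) (iter k.+1 s l) - lam) = u l - u (iter m s l).
Proof.
move=> Ht; elim => [|m IH] l; first by rewrite big_ord0 /= subrr.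
rewrite big_ord_recr /= IH.
have := Ht (iter m s l); lra.
Qed.

Lemma min_uniq (n : nat) (s : 'I_n -> 'I_n) (a b : 'I_n) :
  is_min_cyc s a -> is_min_cyc s b -> a = b.
Proof.
move=> /andP[ca /forallP Ha] /andP[cb /forallP Hb].
apply/val_inj/eqP; rewrite eqn_leq (implyP (Ha b) cb) (implyP (Hb a) ca).
done.
Qed.

Lemma steps_spec (n : nat) (E : rel 'I_n) (s : 'I_n -> 'I_n) (v : 'I_n) :
  inXi E s -> is_min_cyc s v -> forall l, iter (steps s l) s l = v.
Proof.
move=> [_ [_ Hx]] Hv l.
have [k Hk] := Hx _ _ (iter_cycle s l) (proj1 (andP Hv)).
rewrite -iterD in Hk.
have [m [mn Hm]] := shorten Hk.
have Hhas : has (fun k => is_min_cyc s (iter k s l)) (iota 0 n).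
  by apply/hasP; exists m; [rewrite mem_iota | rewrite Hm].
have := nth_find 0%N Hhas.
have := Hhas; rewrite has_find size_iota => hf.
rewrite nth_iota // add0n => H.
exact: min_uniq H Hv.
Qed.

Lemma exists_min_cyc (n : nat) (E : rel 'I_n) (s : 'I_n -> 'I_n) :
  inXi E s -> exists v, is_min_cyc s v.
Proof.
move=> [_ [[c0 hc0] _]].
case: (@arg_minnP _ c0 (on_cycle s) (fun c => nat_of_ord c) hc0) => v cv Hv.
exists v; apply/andP; split => //; apply/forallP => w; apply/implyP => cw.
exact: Hv.
Qed.

Lemma u_rel (R : realType) (n : nat) (E : rel 'I_n) (s : 'I_n -> 'I_n)
  (r : 'I_n -> 'I_n -> R) (lam : R) (u : 'I_n -> R) :
  inXi E s -> tight r s lam u ->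
  forall a b, u a - u b = u_pol s r a - u_pol s r b.
Proof.
move=> hX Ht a b.
have [v Hv] := exists_min_cyc hX.
rewrite /u_pol -(lam_eq hX Ht) !(tele Ht) !(steps_spec hX Hv).
lra.
Qed.

Lemma strict_solves (R : realType) (n : nat) (E : rel 'I_n) (isMax : pred 'I_n)
  (r : 'I_n -> 'I_n -> R) (s : 'I_n -> 'I_n) (lam : R) (u : 'I_n -> R) :
  is_policy E s -> tight r s lam u -> strict E isMax r s lam u ->
  solves E isMax r lam u.
Proof.
move=> Hp Ht Hs k; split => Mk; (split; last by exists (s k); split; [exact: Hp | exact: Ht]);
  move=> j Ej; case: (eqVneq j (s k)) => [->|ne]; rewrite ?Ht //;
  have [H1 H2] := Hs k j Ej ne.
- exact: ltW (H1 Mk).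
- exact: ltW (H2 Mk).
Qed.

Lemma exists_max (R : realType) (n : nat) (c0 : 'I_n) (f : 'I_n -> R) :
  exists a, forall k, f k <= f a.
Proof.
case: (@arg_maxP _ R 'I_n c0 xpredT f isT) => a _ H.
by exists a => k; apply: H.
Qed.

Lemma exists_min (R : realType) (n : nat) (c0 : 'I_n) (f : 'I_n -> R) :
  exists a, forall k, f a <= f k.
Proof.
case: (@arg_minP _ R 'I_n c0 xpredT f isT) => a _ H.
by exists a => k; apply: H.
Qed.

Lemma unique_pol (R : realType) (n : nat) (E : rel 'I_n) (isMax : pred 'I_n)
  (r : 'I_n -> 'I_n -> R) (s : 'I_n -> 'I_n) (lam : R) (u : 'I_n -> R) :
  inXi E s -> tight r s lam u -> strict E isMax r s lam u ->
  solves E isMax r lam u ->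
  forall s', bias_induced E isMax r s' -> s' =1 s.
Proof.
move=> hX Ht Hs Hsol s' [Hp' [lam' [u' [Hsol' Ht']]]].
have [_ [[c0 hc0] Hx]] := hX.
pose w := fun k => u' k - u k.
have rho : forall k, w k + (lam' - lam) <= w (if isMax k then s' k else s k).
  move=> k; rewrite /w; case Mk: (isMax k).
  - have [HM _] := Hsol k; have [H1 _] := HM Mk.
    have := H1 _ (Hp' k); have := Ht' k; lra.
  - have [_ HN] := Hsol' k; have [H1 _] := HN (negbT Mk).
    have := H1 _ (proj1 hX k); have := Ht k; lra.
have pi : forall k, w (if isMax k then s k else s' k) <= w k + (lam' - lam).
  move=> k; rewrite /w; case Mk: (isMax k).
  - have [HM _] := Hsol' k; have [H1 _] := HM Mk.
    have := H1 _ (proj1 hX k); have := Ht k; lra.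
  - have [_ HN] := Hsol k; have [H1 _] := HN (negbT Mk).
    have := H1 _ (Hp' k); have := Ht' k; lra.
have [a Ha] := exists_max c0 w.
have [b Hb] := exists_min c0 w.
have Hlam : lam' = lam.
  have := rho a; have := Ha (if isMax a then s' a else s a).
  have := pi b; have := Hb (if isMax b then s b else s' b).
  lra.
have eqw : forall k, w (s' k) = w k -> s' k = s k.
  move=> k Hw; case: (eqVneq (s' k) (s k)) => [//|ne].
  have [H1 H2] := Hs k (s' k) (Hp' k) ne.
  exfalso; move: Hw; rewrite /w /= => Hw; have := Ht' k.
  case Mk: (isMax k).
  - have := H1 Mk; lra.
  - have := H2 (negbT Mk); lra.
have clA : forall k, w k = w a -> w (s k) = w a.
  move=> k Hk; have := rho k; case Mk: (isMax k) => Hr.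
  - have Hw : w (s' k) = w k.
      have := Ha (s' k); lra.
    by rewrite -(eqw k Hw) Hw.
  - have := Ha (s k); lra.
have clB : forall k, w k = w b -> w (s k) = w b.
  move=> k Hk; have := pi k; case Mk: (isMax k) => Hr.
  - have := Hb (s k); lra.
  - have Hw : w (s' k) = w k.
      have := Hb (s' k); lra.
    by rewrite -(eqw k Hw) Hw.
have itA : forall m, w (iter m s a) = w a.
  by elim => [|m IH] //=; apply: clA.
have itB : forall m, w (iter m s b) = w b.
  by elim => [|m IH] //=; apply: clB.
have [k Hk] := Hx _ _ (iter_cycle s a) (iter_cycle s b).
have Hab : w a = w b.
  by rewrite -(itA (k + n)%N) iterD Hk itB.
move=> k0; apply: eqw.
have := Ha (s' k0); have := Hb (s' k0); have := Ha k0; have := Hb k0; lra.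
Qed.

Lemma finish (R : realType) (n : nat) (E : rel 'I_n) (isMax : pred 'I_n)
  (r : 'I_n -> 'I_n -> R) (s : 'I_n -> 'I_n) (lam : R) (u : 'I_n -> R)
  (i j : 'I_n) (x : R) :
  inXi E s -> tight r s lam u -> strict E isMax r s lam u ->
  j != s i ->
  (isMax i -> x + u j < lam + u i) ->
  (~~ isMax i -> lam + u i < x + u j) ->
  inP E isMax (upd r i j x) s.
Proof.
move=> hX Ht Hs ne H1 H2.
have Ht2 : tight (upd r i j x) s lam u.
  move=> k; rewrite /upd; case: eqP => [->|_] /=; last exact: Ht.
  rewrite eq_sym (negbTE ne) /=; exact: Ht.
have Hs2 : strict E isMax (upd r i j x) s lam u.
  move=> k l Ekl nl; rewrite /upd; case: ifP => [/andP[/eqP ek /eqP el]|_].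
  - by subst; split.
  - exact: Hs.
have Hsol2 := strict_solves (proj1 hX) Ht2 Hs2.
split.
- by split; [exact: (proj1 hX) | exists lam, u].
- exact: unique_pol hX Ht2 Hs2 Hsol2.
Qed.

Unset Implicit Arguments.

Theorem mainTheorem11 (R : realType) (n : nat) (E : rel 'I_n) (isMax : pred 'I_n)
  (out_edge : forall i, exists j, E i j)
  (erg : ergodic R E isMax)
  (s : 'I_n -> 'I_n) (r : 'I_n -> 'I_n -> R)
  (hXi : inXi E s) (hP : inP E isMax r s) :
  (forall i j, E i j -> ~~ isMax i -> j != s i ->
     forall x : R, lam_pol s r + u_pol s r i - u_pol s r j < x ->
       inP E isMax (upd r i j x) s) /\
  (forall i j, E i j -> isMax i -> j != s i ->
     forall x : R, x < lam_pol s r + u_pol s r i - u_pol s r j ->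
       inP E isMax (upd r i j x) s).
Proof.
have [[Hpol [lam0 [u0 [Hsol Ht]]]] Huniq] := hP.
have Hs : strict E isMax r s lam0 u0.
  move=> k l Ekl ne.
  have Hcontra : r k l + u0 l = lam0 + u0 k -> False.
    move=> Heq.
    pose s2 := fun m => if m == k then l else s m.
    have Hb : bias_induced E isMax r s2.
      split; first by move=> m; rewrite /s2; case: eqP => [->|_].
      exists lam0, u0; split => // m; rewrite /s2; case: eqP => [->|_] //.
    have := Huniq _ Hb k; rewrite /s2 eqxx => el.
    by rewrite el eqxx in ne.
  have [HM HN] := Hsol k; split => Mk.
  - have [H1 _] := HM Mk; have := H1 l Ekl.
    rewrite le_eqVlt => /orP[/eqP Heq|//]; exfalso; exact: Hcontra.
  - have [H1 _] := HN Mk; have := H1 l Ekl.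
    rewrite le_eqVlt => /orP[/eqP Heq|//]; exfalso; exact: Hcontra.
have Hl := lam_eq hXi Ht.
have Hu := u_rel hXi Ht.
split.
- move=> i j Eij Mi ne x Hx; apply: (finish hXi Ht Hs ne).
  + by move=> Mi'; rewrite Mi' in Mi.
  + move=> _; have := Hu i j; lra.
- move=> i j Eij Mi ne x Hx; apply: (finish hXi Ht Hs ne).
  + move=> _; have := Hu i j; lra.
  + by rewrite Mi.
Qed.
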